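(* Let $\mathcal V$ be a variety with a difference term, $A\in\mathcal V$, and $\alpha\in\operatorname{Con}A$ central, i.e. $[\alpha,1_A]=0$. Then \[A(\alpha)/\Delta_{\alpha\alpha}\cong A(\alpha)/\Delta_{\alpha1}\times A/\alpha.\]
   Context: All algebras are in the sense of universal algebra. For $\alpha,\beta\in\operatorname{Con}A$, $[\alpha,\beta]$ is the term-condition (TC) commutator; $1_A$ is the total relation. $A(\alpha)=\{(x,y)\in A\times A:(x,y)\in\alpha\}$ is $\alpha$ viewed as a subalgebra of $A\times A$; $\Delta_{\alpha\beta}$ is the congruence of $A(\alpha)$ generated by $\{((u,u),(v,v)):(u,v)\in\beta\}$. A difference term for $\mathcal V$ is a ternary term $d$ such that for every $A\in\mathcal V$, $\theta\in\operatorname{Con}A$, $(a,b)\in\theta$: $d(a,a,b)=b$ and $(d(a,b,b),a)\in[\theta,\theta]$. *)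

(* Defs.v *)
From mathcomp Require Import all_boot.
From Stdlib Require Import ClassicalEpsilon.
Set Implicit Arguments. Unset Strict Implicit. Unset Printing Implicit Defensive.

Record signature := Signature { op : Type; arity : op -> nat }.

Record algebra (S : signature) := Algebra {
  carrier :> Type;
  interp : forall f : op S, ('I_(arity f) -> carrier) -> carrier }.
Arguments interp {S} _ _ _.

Definition compatible S (A : algebra S) (R : A -> A -> Prop) :=
  forall (f : op S) (a b : 'I_(arity f) -> A),
    (forall i, R (a i) (b i)) -> R (interp A f a) (interp A f b).

Definition is_congruence S (A : algebra S) (R : A -> A -> Prop) :=
  [/\ (forall x, R x x), (forall x y, R x y -> R y x),
      (forall x y z, R x y -> R y z -> R x z) & compatible R].

Definition total_rel (T : Type) : T -> T -> Prop := fun _ _ => True.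

Definition Cg S (A : algebra S) (X : A -> A -> Prop) : A -> A -> Prop :=
  fun x y => forall R, is_congruence R -> (forall u v, X u v -> R u v) -> R x y.

Inductive term (S : signature) (X : Type) : Type :=
  | Var : X -> term S X
  | App : forall f : op S, ('I_(arity f) -> term S X) -> term S X.
Arguments Var {S X} x.
Arguments App {S X} f ts.

Fixpoint eval S (A : algebra S) X (v : X -> A) (t : term S X) : A :=
  match t with
  | Var x => v x
  | App f ts => interp A f (fun i => eval v (ts i))
  end.

Definition satisfies S (A : algebra S) (s t : term S nat) :=
  forall v : nat -> A, eval v s = eval v t.

Definition is_variety S (V : algebra S -> Prop) :=
  exists E : term S nat -> term S nat -> Prop,
    forall A : algebra S, V A <-> (forall s t, E s t -> satisfies A s t).

Definition sum_asg (T : Type) (a c : nat -> T) : nat + nat -> T :=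
  fun z => match z with inl i => a i | inr j => c j end.

Definition centralizes S (A : algebra S) (alpha beta delta : A -> A -> Prop) :=
  forall (t : term S (nat + nat)) (a b c d : nat -> A),
    (forall i, alpha (a i) (b i)) -> (forall j, beta (c j) (d j)) ->
    delta (eval (sum_asg a c) t) (eval (sum_asg a d) t) ->
    delta (eval (sum_asg b c) t) (eval (sum_asg b d) t).

Definition commutator S (A : algebra S) (alpha beta : A -> A -> Prop) : A -> A -> Prop :=
  fun x y => forall delta, is_congruence delta -> centralizes alpha beta delta -> delta x y.

Definition asg3 (T : Type) (x y z : T) : nat -> T :=
  fun i => match i with 0 => x | 1 => y | _ => z end.

Definition is_difference_term S (V : algebra S -> Prop) (d : term S nat) :=
  forall A : algebra S, V A ->
  forall theta : A -> A -> Prop, is_congruence theta ->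
  forall a b : A, theta a b ->
    eval (asg3 a a b) d = b /\ commutator theta theta (eval (asg3 a b b) d) a.

Definition prod_alg S (A B : algebra S) : algebra S :=
  @Algebra S (A * B)%type
    (fun f a => (interp A f (fun i => (a i).1), interp B f (fun i => (a i).2))).

(* A(alpha): alpha as a subalgebra of A x A *)
Definition cong_alg S (A : algebra S) (alpha : A -> A -> Prop)
  (H : is_congruence alpha) : algebra S.
Proof.
refine (@Algebra S {p : A * A | alpha p.1 p.2}
  (fun f a => exist _ (interp A f (fun i => (sval (a i)).1),
                       interp A f (fun i => (sval (a i)).2)) _)).
case: H => _ _ _ Hc; apply: Hc => i; exact: (svalP (a i)).
Defined.

Definition Delta S (A : algebra S) (alpha beta : A -> A -> Prop)
  (H : is_congruence alpha) : cong_alg H -> cong_alg H -> Prop :=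
  Cg (fun p q : cong_alg H =>
        exists u v, beta u v /\ sval p = (u, u) /\ sval q = (v, v)).

Definition quot_carrier S (A : algebra S) (theta : A -> A -> Prop) :=
  {P : A -> Prop | exists a, P = theta a}.

Definition class_rep S (A : algebra S) (theta : A -> A -> Prop)
  (c : quot_carrier theta) : A :=
  proj1_sig (constructive_indefinite_description _ (proj2_sig c)).

Definition class_of S (A : algebra S) (theta : A -> A -> Prop) (a : A)
  : quot_carrier theta := exist _ (theta a) (ex_intro _ a erefl).

Definition quot_alg S (A : algebra S) (theta : A -> A -> Prop) : algebra S :=
  @Algebra S (quot_carrier theta)
    (fun f c => class_of theta (interp A f (fun i => class_rep (c i)))).

Definition is_hom S (A B : algebra S) (h : A -> B) :=
  forall (f : op S) (a : 'I_(arity f) -> A),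
    h (interp A f a) = interp B f (fun i => h (a i)).

Definition isomorphic S (A B : algebra S) :=
  exists h : A -> B, is_hom h /\ bijective h.
Arguments Delta {S A} alpha beta H _ _.
Arguments cong_alg {S A} alpha H.

(* Main.v *)
Require Import Defs.
From mathcomp Require Import all_boot.
From Stdlib Require Import FunctionalExtensionality ProofIrrelevance PropExtensionality ClassicalEpsilon.
Set Implicit Arguments. Unset Strict Implicit.

Fixpoint subst S X Y (t : term S X) (s : X -> term S Y) : term S Y :=
  match t with Var x => s x | App f ts => App f (fun i => subst (ts i) s) end.

Lemma eval_subst S (A : algebra S) X Y (v : Y -> A) (t : term S X) s :
  eval v (subst t s) = eval (fun x => eval v (s x)) t.
Proof.
elim: t => [x|f ts IH] //=. congr (interp A f); apply: functional_extensionality => i; exact: IH.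
Qed.

Lemma eval_compat S (A : algebra S) X (R : A -> A -> Prop) (HR : is_congruence R)
  (t : term S X) v w : (forall x, R (v x) (w x)) -> R (eval v t) (eval w t).
Proof. case: HR => _ _ _ Hc H. elim: t => [x|f ts IH] /=; [exact: H | apply: Hc => i; exact: IH]. Qed.

Definition D3 S (A : algebra S) (d : term S nat) (x y z : A) := eval (asg3 x y z) d.

Definition dsub S Y (d : term S nat) (t1 t2 t3 : term S Y) :=
  subst d (fun k => match k with 0 => t1 | 1 => t2 | _ => t3 end).

Lemma eval_dsub S (A : algebra S) Y (v : Y -> A) d t1 t2 t3 :
  eval v (dsub d t1 t2 t3) = D3 d (eval v t1) (eval v t2) (eval v t3).
Proof.
rewrite /dsub eval_subst /D3; congr eval; apply: functional_extensionality => -[|[|k]] //.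
Qed.

Lemma D3_compat S (A : algebra S) R (HR : is_congruence R) d (x y z x' y' z' : A) :
  R x x' -> R y y' -> R z z' -> R (D3 d x y z) (D3 d x' y' z').
Proof. move=> *; apply: eval_compat => // -[|[|k]] //. Qed.

Definition fam (T : Type) n (F : 'I_n -> T) (x0 : T) (k : nat) : T :=
  if (insub k : option 'I_n) is Some i then F i else x0.
Lemma famE (T : Type) n (F : 'I_n -> T) x0 (i : 'I_n) : fam F x0 i = F i.
Proof. by rewrite /fam valK. Qed.

Lemma half_dbl n : (n.*2)./2 = n. Proof. exact: doubleK. Qed.
Lemma half_dbl1 n : (n.*2.+1)./2 = n. Proof. by rewrite /= uphalf_double. Qed.
Lemma odd_dbl1 n : odd (n.*2.+1). Proof. by rewrite /= odd_double. Qed.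

Definition HD1P S (A : algebra S) d := forall x y : A, D3 d x x y = y.
Definition HD2P S (A : algebra S) (alpha : A -> A -> Prop) d :=
  forall x y, alpha x y -> D3 d x y y = x.
Definition CenP S (A : algebra S) (alpha : A -> A -> Prop) :=
  forall (t : term S (nat + nat)) (a b c e : nat -> A), (forall i, alpha (a i) (b i)) ->
  eval (sum_asg a c) t = eval (sum_asg a e) t -> eval (sum_asg b c) t = eval (sum_asg b e) t.

Definition shr S (t : term S (nat + nat)) : term S (nat + nat) :=
  subst t (fun v => Var (match v with inl i => inl i | inr j => inr j.+1 end)).
Definition extw (T : Type) (c : nat -> T) (w : T) : nat -> T :=
  fun j => match j with 0 => w | j.+1 => c j end.

Lemma eval_shr S (A : algebra S) (t : term S (nat + nat)) (a c : nat -> A) w :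
  eval (sum_asg a (extw c w)) (shr t) = eval (sum_asg a c) t.
Proof. rewrite /shr eval_subst; congr eval; apply: functional_extensionality => -[] //. Qed.

Lemma master S (A : algebra S) alpha d (HD1 : HD1P A d) (HD2 : @HD2P S A alpha d)
  (Hcen : CenP alpha) (t1 t2 : term S (nat + nat)) (a b c e : nat -> A) :
  (forall i, alpha (a i) (b i)) ->
  eval (sum_asg a c) t1 = eval (sum_asg a c) t2 ->
  eval (sum_asg a e) t1 = eval (sum_asg a e) t2 ->
  eval (sum_asg b c) t1 = eval (sum_asg b c) t2 ->
  alpha (eval (sum_asg b e) t1) (eval (sum_asg b e) t2) ->
  eval (sum_asg b e) t1 = eval (sum_asg b e) t2.
Proof.
move=> Hab H1 H2 H3 H4.
set sg := dsub d (shr t1) (shr t2) (Var (inr 0)).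
set w := eval (sum_asg b e) t2.
have := Hcen sg a b (extw c w) (extw e w) Hab.
rewrite /sg !eval_dsub !eval_shr /= H1 H2 H3 !HD1 => /(_ erefl) ->.
by rewrite HD2.
Qed.

Lemma Lop S (A : algebra S) alpha (Ha : is_congruence alpha) d (HD1 : HD1P A d)
  (HD2 : @HD2P S A alpha d) (Hcen : CenP alpha) (f : op S)
  (x y z : 'I_(arity f) -> A) : (forall i, alpha (x i) (y i)) ->
  interp A f (fun i => D3 d (y i) (x i) (z i)) =
  D3 d (interp A f y) (interp A f x) (interp A f z).
Proof.
move=> Hxy; have Ha' := Ha; case: Ha' => Hr Hs Ht Hc.
set x0 := interp A f x.
pose t1 : term S (nat + nat) := App f (fun i => dsub d (Var (inl (nat_of_ord i).*2))
  (Var (inl (nat_of_ord i).*2.+1)) (Var (inr (nat_of_ord i)))).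
pose t2 : term S (nat + nat) := dsub d (App f (fun i => Var (inl (nat_of_ord i).*2)))
  (App f (fun i => Var (inl (nat_of_ord i).*2.+1))) (App f (fun i => Var (inr (nat_of_ord i)))).
have ev1 p q : eval (sum_asg p q) t1 = interp A f (fun i => D3 d (p (nat_of_ord i).*2)
   (p (nat_of_ord i).*2.+1) (q i)).
  by rewrite /=; congr (interp A f); apply: functional_extensionality => i; rewrite eval_dsub.
have ev2 p q : eval (sum_asg p q) t2 = D3 d (interp A f (fun i => p (nat_of_ord i).*2))
   (interp A f (fun i => p (nat_of_ord i).*2.+1)) (interp A f (fun i => q (nat_of_ord i))).
  by rewrite eval_dsub.
pose a' k := fam x x0 k./2.
pose b' k := if odd k then fam x x0 k./2 else fam y x0 k./2.
have ea1 (i : 'I_(arity f)) : a' (nat_of_ord i).*2 = x i by rewrite /a' half_dbl famE.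
have ea2 (i : 'I_(arity f)) : a' (nat_of_ord i).*2.+1 = x i by rewrite /a' half_dbl1 famE.
have eb1 (i : 'I_(arity f)) : b' (nat_of_ord i).*2 = y i by rewrite /b' odd_double half_dbl famE.
have eb2 (i : 'I_(arity f)) : b' (nat_of_ord i).*2.+1 = x i by rewrite /b' odd_dbl1 half_dbl1 famE.
have Hab : forall k, alpha (a' k) (b' k).
  move=> k; rewrite /a' /b'; case: (odd k) => //; rewrite /fam.
  by case: (insub _) => [i|] //.
have M := master (t1:=t1) (t2:=t2) (c:=fam x x0) (e:=fam z x0) HD1 HD2 Hcen Hab.
have fx : (fun i : 'I_(arity f) => fam x x0 i) = x.
  by apply: functional_extensionality => i; rewrite famE.
have fz : (fun i : 'I_(arity f) => fam z x0 i) = z.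
  by apply: functional_extensionality => i; rewrite famE.
have Ea p q (Hp1 : forall i : 'I_(arity f), p (nat_of_ord i).*2 = x i)
   (Hp2 : forall i : 'I_(arity f), p (nat_of_ord i).*2.+1 = x i) :
   eval (sum_asg p q) t1 = eval (sum_asg p q) t2.
  rewrite ev1 ev2.
  have -> : (fun i : 'I_(arity f) => D3 d (p (nat_of_ord i).*2) (p (nat_of_ord i).*2.+1) (q i))
     = (fun i => q i) by apply: functional_extensionality => i; rewrite Hp1 Hp2 HD1.
  have -> : (fun i : 'I_(arity f) => p (nat_of_ord i).*2) = x
    by apply: functional_extensionality => i; rewrite Hp1.
  have -> : (fun i : 'I_(arity f) => p (nat_of_ord i).*2.+1) = x
    by apply: functional_extensionality => i; rewrite Hp2.
  by rewrite HD1.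
have M' := M (Ea _ _ ea1 ea2) (Ea _ _ ea1 ea2).
rewrite !ev1 !ev2 in M'.
have ey : (fun i : 'I_(arity f) => b' (nat_of_ord i).*2) = y
  by apply: functional_extensionality => i; rewrite eb1.
have ex : (fun i : 'I_(arity f) => b' (nat_of_ord i).*2.+1) = x
  by apply: functional_extensionality => i; rewrite eb2.
rewrite ey ex fz in M'.
have -> : (fun i : 'I_(arity f) => D3 d (y i) (x i) (z i)) =
   (fun i => D3 d (b' (nat_of_ord i).*2) (b' (nat_of_ord i).*2.+1) (fam z x0 i)).
  by apply: functional_extensionality => i; rewrite eb1 eb2 famE.
apply: M'.
- have -> : (fun i : 'I_(arity f) => D3 d (b' (nat_of_ord i).*2) (b' (nat_of_ord i).*2.+1) (fam x x0 i)) = y.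
    by apply: functional_extensionality => i; rewrite eb1 eb2 famE HD2 //; apply: Hs.
  rewrite fx HD2 //; apply: Hs; apply: Hc.
  done.
- apply: (Ht _ (interp A f z)).
  + apply: (Ht _ (interp A f (fun i => D3 d (x i) (x i) (z i)))).
    * apply: Hc => i; rewrite eb1 eb2 famE; apply: D3_compat => //; exact: Hs.
    * have -> : (fun i => D3 d (x i) (x i) (z i)) = z by apply: functional_extensionality => i; rewrite HD1.
      exact: Hr.
  + have HH := D3_compat Ha d (Hc _ _ _ Hxy) (Hr (interp A f x)) (Hr (interp A f z)); rewrite HD1 in HH; exact: HH.
Qed.

Lemma Dsym S (A : algebra S) alpha (Ha : is_congruence alpha) d (HD1 : HD1P A d)
  (HD2 : @HD2P S A alpha d) (Hcen : CenP alpha) (a b c : A) :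
  alpha a b -> D3 d (D3 d b a c) c a = b.
Proof.
move=> Hab; have Ha' := Ha; case: Ha' => Hr Hs Ht Hc.
pose t1 : term S (nat + nat) :=
  dsub d (dsub d (Var (inl 0)) (Var (inl 1)) (Var (inr 0))) (Var (inr 0)) (Var (inl 1)).
pose t2 : term S (nat + nat) := Var (inl 0).
have H : forall k, alpha ((fun _ => a) k) ((fun k => if k is 0 then b else a) k).
  by case.
have M := master (t1:=t1) (t2:=t2) (c:=fun _ => a) (e:=fun _ => c) HD1 HD2 Hcen H.
move: M; rewrite /t1 /t2 !eval_dsub /= !HD1; apply=> //.
- by rewrite !HD2 //; apply: Hs.
- apply: (Ht _ a); last by [].
  have := D3_compat Ha d (D3_compat Ha d (Hs _ _ Hab) (Hr a) (Hr c)) (Hr c) (Hr a).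
  by rewrite !HD1.
Qed.

Lemma Dtrans S (A : algebra S) alpha (Ha : is_congruence alpha) d (HD1 : HD1P A d)
  (HD2 : @HD2P S A alpha d) (Hcen : CenP alpha) (a b c k : A) :
  alpha a b -> D3 d (D3 d b a c) c k = D3 d b a k.
Proof.
move=> Hab; have Ha' := Ha; case: Ha' => Hr Hs Ht Hc.
pose t1 : term S (nat + nat) :=
  dsub d (dsub d (Var (inl 0)) (Var (inl 1)) (Var (inr 0))) (Var (inr 0)) (Var (inl 2)).
pose t2 : term S (nat + nat) := dsub d (Var (inl 0)) (Var (inl 1)) (Var (inl 2)).
have H : forall j, alpha ((fun j => match j with 0 => a | 1 => a | _ => k end) j)
   ((fun j => match j with 0 => b | 1 => a | _ => k end) j).
  by case=> [|[|j]].
have M := master (t1:=t1) (t2:=t2) (c:=fun _ => a) (e:=fun _ => c) HD1 HD2 Hcen H.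
move: M; rewrite /t1 /t2 !eval_dsub /= !HD1; apply=> //.
- by rewrite !HD2 //; apply: Hs.
- apply: (Ht _ k).
  + have := D3_compat Ha d (D3_compat Ha d (Hs _ _ Hab) (Hr a) (Hr c)) (Hr c) (Hr k).
    by rewrite !HD1.
  + have := D3_compat Ha d Hab (Hr a) (Hr k).
    by rewrite !HD1.
Qed.

Lemma Cg_cong S (A : algebra S) (X : A -> A -> Prop) : is_congruence (Cg X).
Proof.
split.
- by move=> x R [Hr _ _ _].
- by move=> x y H R HR HX; case: (HR) => _ Hs _ _; apply: Hs; apply: H.
- by move=> x y z H1 H2 R HR HX; case: (HR) => _ _ Ht _; apply: (Ht _ y); [apply: H1|apply: H2].
- by move=> f a b H R HR HX; case: (HR) => _ _ _ Hc; apply: Hc => i; apply: H.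
Qed.

Lemma Cg_gen S (A : algebra S) (X : A -> A -> Prop) u v : X u v -> Cg X u v.
Proof. by move=> H R _ HX; apply: HX. Qed.

Lemma Cg_min S (A : algebra S) (X R : A -> A -> Prop) : is_congruence R ->
  (forall u v, X u v -> R u v) -> forall x y, Cg X x y -> R x y.
Proof. by move=> HR HX x y H; apply: H. Qed.

Lemma sig_eq (T : Type) (P : T -> Prop) (x y : {p | P p}) : sval x = sval y -> x = y.
Proof. case: x y => [x px] [y py] /= E; subst y; f_equal; apply: proof_irrelevance. Qed.

Lemma eval_cong S (A : algebra S) alpha (H : is_congruence alpha) X
  (v : X -> cong_alg alpha H) (t : term S X) :
  sval (eval v t) = (eval (A:=A) (fun x => (sval (v x)).1) t, eval (A:=A) (fun x => (sval (v x)).2) t).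
Proof.
elim: t => [x|f ts IH] /=; first by case: (sval (v x)).
have E1 : (fun i => (sval (eval v (ts i))).1) = (fun i => eval (A:=A) (fun x => (sval (v x)).1) (ts i)).
  by apply: functional_extensionality => i; rewrite IH.
have E2 : (fun i => (sval (eval v (ts i))).2) = (fun i => eval (A:=A) (fun x => (sval (v x)).2) (ts i)).
  by apply: functional_extensionality => i; rewrite IH.
by rewrite E1 E2.
Qed.

Lemma rep_spec S (A : algebra S) (theta : A -> A -> Prop) (c : quot_carrier theta) :
  sval c = theta (class_rep c).
Proof. exact: (proj2_sig (constructive_indefinite_description _ (proj2_sig c))). Qed.

Lemma Q1 S (A : algebra S) (theta : A -> A -> Prop) (c : quot_carrier theta) :
  class_of theta (class_rep c) = c.
Proof. by apply: sig_eq; rewrite /= -rep_spec. Qed.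

Lemma Q2 S (A : algebra S) (theta : A -> A -> Prop) (H : is_congruence theta) x y :
  theta x y -> class_of theta x = class_of theta y.
Proof.
case: H => Hr Hs Ht _ Hxy; apply: sig_eq => /=.
apply: functional_extensionality => z; apply: propositional_extensionality; split.
- by move=> h; apply: (Ht _ x) => //; apply: Hs.
- by move=> h; apply: (Ht _ y).
Qed.

Lemma Q4 S (A : algebra S) (theta : A -> A -> Prop) (H : is_congruence theta) x :
  theta (class_rep (class_of theta x)) x.
Proof.
case: H => Hr Hs Ht _.
have E := rep_spec (class_of theta x); rewrite /= in E.
apply: Hs; rewrite E; exact: Hr.
Qed.

Theorem lemma3 (S : signature) (V : algebra S -> Prop)
  (HV : is_variety V)
  (Hd : exists d : term S nat, is_difference_term V d)
  (A : algebra S) (HA : V A)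
  (alpha : A -> A -> Prop) (Halpha : is_congruence alpha)
  (Hcentral : forall x y : A, commutator alpha (@total_rel A) x y -> x = y) :
  isomorphic (quot_alg (Delta alpha alpha Halpha))
    (prod_alg (quot_alg (Delta alpha (@total_rel A) Halpha)) (quot_alg alpha)).
Proof.
case: Hd => d Hdd.
have Ha' := Halpha; case: Ha' => Hr Hs Ht Hc.
have Htot : is_congruence (@total_rel A) by split.
have HD1 : HD1P A d by move=> x y; case: (Hdd A HA _ Htot x y I).
have HD2 : HD2P alpha d.
  move=> x y Hxy; case: (Hdd A HA _ Halpha x y Hxy) => _ Hcm; apply: Hcentral.
  move=> delta Hdl Hcd; apply: Hcm => // t a b c e Hab _; apply: Hcd => // j.
have Hcen : CenP alpha.
  move=> t a b c e Hab Heq; apply: Hcentral => delta Hdl Hcd.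
  apply: (Hcd t a b c e Hab) => //; rewrite Heq; by case: Hdl.
pose Aa := cong_alg alpha Halpha.
pose Daa := Delta alpha alpha Halpha.
pose Da1 := Delta alpha (@total_rel A) Halpha.
have CDaa : is_congruence Daa by apply: Cg_cong.
have CDa1 : is_congruence Da1 by apply: Cg_cong.
pose R := fun p q : Aa => (sval q).2 = D3 d (sval p).2 (sval p).1 (sval q).1.
have CR : is_congruence R.
  split.
  - move=> p; rewrite /R HD2 //; apply: Hs; exact: (svalP p).
  - move=> p q; rewrite /R => ->; rewrite (Dsym Halpha HD1 HD2 Hcen) //; exact: (svalP p).
  - move=> p q r; rewrite /R => Hq ->; rewrite Hq (Dtrans Halpha HD1 HD2 Hcen) //; exact: (svalP p).
  - move=> f a b Hab; rewrite /R /=.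
    have -> : (fun i => (sval (b i)).2) =
       (fun i => D3 d (sval (a i)).2 (sval (a i)).1 (sval (b i)).1).
      by apply: functional_extensionality => i; apply: Hab.
    apply: (Lop Halpha HD1 HD2 Hcen) => i; exact: (svalP (a i)).
have Da1R : forall p q, Da1 p q -> R p q.
  apply: Cg_min => // p q [u [v [_ [Ep Eq]]]]; by rewrite /R Ep Eq /= HD1.
have DaaDa1 : forall p q, Daa p q -> Da1 p q.
  apply: Cg_min => // p q [u [v [_ [Ep Eq]]]]; apply: Cg_gen; by exists u, v.
pose R2 := fun p q : Aa => alpha (sval p).1 (sval q).1.
have CR2 : is_congruence R2.
  split; rewrite /R2.
  - by move=> p.
  - by move=> p q; apply: Hs.
  - by move=> p q r; apply: Ht.
  - by move=> f a b Hab /=; apply: Hc.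
have DaaR2 : forall p q, Daa p q -> R2 p q.
  apply: Cg_min => // p q [u [v [Huv [Ep Eq]]]]; by rewrite /R2 Ep Eq.
pose diag := fun x : A => (exist _ (x, x) (Hr x) : Aa).
have mkP : forall (p : Aa) k, alpha k (D3 d (sval p).2 (sval p).1 k).
  move=> p k; have := D3_compat Halpha d (svalP p) (Hr (sval p).1) (Hr k).
  by rewrite HD1.
pose mk := fun (p : Aa) k => (exist _ (k, D3 d (sval p).2 (sval p).1 k) (mkP p k) : Aa).
have K : forall (Dl : Aa -> Aa -> Prop), is_congruence Dl -> forall p k,
    Dl (diag (sval p).1) (diag k) -> Dl p (mk p k).
  move=> Dl HDl p k Hk.
  have := @eval_compat S Aa nat Dl HDl d (asg3 p (diag (sval p).1) (diag (sval p).1))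
     (asg3 p (diag (sval p).1) (diag k)).
  have E1 : eval (A:=Aa) (asg3 p (diag (sval p).1) (diag (sval p).1)) d = p.
    apply: sig_eq; rewrite eval_cong.
    have -> : (fun x => (sval (asg3 p (diag (sval p).1) (diag (sval p).1) x)).1) =
       asg3 (sval p).1 (sval p).1 (sval p).1 by apply: functional_extensionality => -[|[|x]].
    have -> : (fun x => (sval (asg3 p (diag (sval p).1) (diag (sval p).1) x)).2) =
       asg3 (sval p).2 (sval p).1 (sval p).1 by apply: functional_extensionality => -[|[|x]].
    have := HD1 (sval p).1 (sval p).1; rewrite /D3 => ->.
    have := HD2 _ _ (Hs _ _ (svalP p)); rewrite /D3 => ->.
    by case: (sval p).
  have E2 : eval (A:=Aa) (asg3 p (diag (sval p).1) (diag k)) d = mk p k.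
    apply: sig_eq; rewrite eval_cong.
    have -> : (fun x => (sval (asg3 p (diag (sval p).1) (diag k) x)).1) =
       asg3 (sval p).1 (sval p).1 k by apply: functional_extensionality => -[|[|x]].
    have -> : (fun x => (sval (asg3 p (diag (sval p).1) (diag k) x)).2) =
       asg3 (sval p).2 (sval p).1 k by apply: functional_extensionality => -[|[|x]].
    have := HD1 (sval p).1 k; rewrite /D3 => ->.
    by [].
  rewrite E1 E2; apply => -[|[|x]] /=; case: HDl => // Hr' _ _ _; exact: Hr'.
have Inj : forall p q, R p q -> alpha (sval p).1 (sval q).1 -> Daa p q.
  move=> p q HR Ha.
  have -> : q = mk p (sval q).1.
    apply: sig_eq => /=; rewrite -HR; by case: (sval q).
  apply: (K Daa CDaa); apply: Cg_gen; exists (sval p).1, (sval q).1; by split.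
pose h := fun c : quot_alg Daa =>
  ((class_of Da1 (class_rep c), class_of alpha (sval (class_rep c)).1)
     : prod_alg (quot_alg Da1) (quot_alg alpha)).
pose g := fun c : prod_alg (quot_alg Da1) (quot_alg alpha) =>
  (class_of Daa (mk (class_rep c.1) (class_rep c.2)) : quot_alg Daa).
exists h; split.
- move=> f a; apply: f_equal2; apply: Q2 => //.
  + case: (CDa1) => _ Hs1 Ht1 Hc1.
    apply: (Ht1 _ (interp Aa f (fun i => class_rep (a i)))).
    * apply: DaaDa1; exact: Q4.
    * exact: (Hc1 f _ _ (fun i => Hs1 _ _ (Q4 CDa1 (class_rep (a i))))).
  + apply: (Ht _ (sval (interp Aa f (fun i => class_rep (a i)))).1).
    * by apply: DaaR2; exact: Q4.
    * rewrite /=; apply: Hc => i; apply: Hs; exact: Q4.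
- exists g.
  + move=> c; rewrite /g /h /=; rewrite -[in RHS](Q1 c); apply: Q2 => //.
    case: (CDaa) => _ Hs0 _ _; apply: Hs0; apply: Inj.
    * rewrite /R /=.
      have HR0 : R (class_rep c) (class_rep (class_of Da1 (class_rep c))).
        case: (CR) => _ HsR _ _; apply: HsR; apply: Da1R; exact: Q4.
      rewrite HR0 (Dtrans Halpha HD1 HD2 Hcen) //; exact: (svalP (class_rep c)).
    * rewrite /=; apply: Hs; exact: Q4.
  + move=> [c1 c2]; rewrite /g /h /=; congr pair.
    * rewrite -[in RHS](Q1 c1); apply: Q2 => //.
      case: (CDa1) => _ Hs1 Ht1 _.
      apply: (Ht1 _ (mk (class_rep c1) (class_rep c2))).
      -- apply: DaaDa1; exact: Q4.
      -- apply: Hs1; apply: (K Da1 CDa1); apply: Cg_gen.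
         by exists (sval (class_rep c1)).1, (class_rep c2).
    * rewrite -[in RHS](Q1 c2); apply: Q2 => //.
      have := DaaR2 _ _ (Q4 CDaa (mk (class_rep c1) (class_rep c2))).
      by rewrite /R2 /=.
Qed.
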